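(* Let $S$ be a profinite semigroup, let $\operatorname{End} S$ be the monoid of continuous endomorphisms of $S$ and $\operatorname{Aut} S$ the group of continuous automorphisms of $S$, both equipped with the compact-open topology. Then $\operatorname{End} S$ (respectively, $\operatorname{Aut} S$) is compact if and only if $S$ admits a fundamental system of open fully invariant (respectively, characteristic) congruences. Moreover, if $\operatorname{End} S$ (respectively, $\operatorname{Aut} S$) is compact, then it is profinite and the compact-open topology on it coincides with the topology of pointwise convergence.
   Context: A congruence $\rho$ on $S$ is open if it is an open subset of $S\times S$. A congruence $\rho$ is fully invariant if for every continuous endomorphism $f$ of $S$, $(x,y)\in\rho$ implies $(f(x),f(y))\in\rho$; it is characteristic if this holds for every continuous automorphism $f$ of $S$. A fundamental system of open fully invariant (resp. characteristic) congruences is a family of such congruences such that every open congruence on $S$ contains a member of the family (i.e., a fundamental system of entourages for the unique uniformity of $S$, whose entourages are the neighbourhoods of the diagonal). Profinite means compact, Hausdorff and totally disconnected (as a topological monoid/group). *)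

(* Defs.v *)
From HB Require Import structures.
From mathcomp Require Import all_boot all_order all_algebra.
From mathcomp Require Import all_classical all_reals all_analysis.
Set Implicit Arguments. Unset Strict Implicit. Unset Printing Implicit Defensive.
Local Open Scope classical_set_scope.

Section Defs.
Context {S : topologicalType} (mul : S -> S -> S).

Definition CO := {compact-open, S -> S}.
Definition PW := {ptws S -> S}.

Definition profinite_semigroup : Prop :=
  associative mul /\ continuous (fun p : S * S => mul p.1 p.2) /\
  compact [set: S] /\ hausdorff_space S /\ totally_disconnected [set: S].

Definition is_endo (f : S -> S) : Prop :=
  continuous f /\ forall x y, f (mul x y) = mul (f x) (f y).
Definition End_set : set (S -> S) := [set f | is_endo f].
Definition Aut_set : set (S -> S) := [set f | is_endo f /\ bijective f].

Definition congruence (r : set (S * S)) : Prop :=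
  [/\ (forall x, r (x, x)),
      (forall x y, r (x, y) -> r (y, x)),
      (forall x y z, r (x, y) -> r (y, z) -> r (x, z)) &
      (forall x y x' y', r (x, y) -> r (x', y') -> r (mul x x', mul y y'))].

Definition open_congruence (r : set (S * S)) : Prop :=
  congruence r /\ open r.

Definition invariant_under (F : set (S -> S)) (r : set (S * S)) : Prop :=
  forall f, F f -> forall x y, r (x, y) -> r (f x, f y).

Definition fully_invariant := invariant_under End_set.
Definition characteristic := invariant_under Aut_set.

Definition fundamental_system (P : set (S * S) -> Prop) : Prop :=
  forall r, open_congruence r ->
    exists s, [/\ open_congruence s, P s & s `<=` r].

Definition finv (f : S -> S) : S -> S :=
  match pselect (exists g, cancel f g /\ cancel g f) with
  | left H => projT1 (cid H)
  | right _ => f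
  end.

Definition profinite_monoid (E : set (S -> S)) : Prop :=
  [/\ @compact CO E, hausdorff_space (subspace (E : set CO)),
      @totally_disconnected CO E &
      {within (E `*` E : set (CO * CO)),
         continuous (fun p : CO * CO => (p.1 \o p.2 : CO))}].

Definition profinite_group (E : set (S -> S)) : Prop :=
  profinite_monoid E /\
  {within (E : set CO), continuous (fun f : CO => (finv f : CO))}.

Definition same_topology_on (E : set (S -> S)) : Prop :=
  forall A : set (S -> S), A `<=` E ->
    ((exists U : set CO, open U /\ A = U `&` E) <->
     (exists U : set PW, open U /\ A = U `&` E)).

End Defs.

(* Main.v *)
From Pilot Require Import Defs.
From HB Require Import structures.
From mathcomp Require Import all_boot all_order all_algebra.
From mathcomp Require Import all_classical all_reals all_analysis.
Local Open Scope classical_set_scope.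


Section Topo.
Context {T : topologicalType}.

Lemma fip (P : set (set T)) (O : set T) : compact [set: T] -> P setT ->
  (forall A B, P A -> P B -> P (A `&` B)) -> (forall A, P A -> closed A) ->
  open O -> (forall x, (forall A, P A -> A x) -> O x) -> exists2 A, P A & A `<=` O.
Proof.
move=> cT PT PI Pc oO PO; apply: contrapT => nA.
have ne : forall A, P A -> A `&` ~` O !=set0.
  move=> A PA; apply/set0P/eqP => A0; apply: nA; exists A => // z Az.
  by apply: contrapT => Oz; have : (A `&` ~` O) z by []; rewrite A0.
pose F := filter_from P (fun A => A `&` ~` O).
have FF : ProperFilter F.
  apply: filter_from_proper; last by move=> A /ne.
  apply: filter_from_filter; first by exists setT.
  move=> A B PA PB; exists (A `&` B); first exact: PI.
  by move=> z [[Az Bz] Oz]; split; split.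
have [p [_ clp]] := cT F FF (filterT).
have cl : forall A, P A -> (A `&` ~` O) p.
  move=> A PA; have cA : closed (A `&` ~` O) by apply: closedI; [exact: Pc| exact: open_closedC].
  rewrite (closure_id (A `&` ~` O)).1 //; move=> B nB.
  by apply: clp => //; exists A.
have Op : O p by apply: PO => Z /cl [].
by have [_] := cl setT PT.
Qed.

Lemma sep_closed (X1 X2 : set T) : hausdorff_space T -> compact [set: T] ->
  closed X1 -> closed X2 -> X1 `&` X2 = set0 ->
  exists U1, exists U2, [/\ open U1, open U2, X1 `<=` U1, X2 `<=` U2 & U1 `&` U2 = set0].
Proof.
move=> hT cT c1 c2 d12.
have nT := compact_normal hT cT.
have sn : set_nbhs X1 (~` X2).
  apply/set_nbhsP; exists (~` X2); split => //; first exact: closed_openC.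
  by move=> z X1z X2z; have : (X1 `&` X2) z by []; rewrite d12.
have [C snC clC] := nT X1 c1 _ sn.
have [C0 [oC0 X1C0 C0C]] := (set_nbhsP _ _).1 snC.
exists C0, (~` closure C); split => //.
- exact/closed_openC/closed_closure.
- by move=> z X2z cz; exact: (clC z cz X2z).
- apply/seteqP; split => // z [C0z nz]; apply: nz; apply: subset_closure; exact: C0C.
Qed.

Lemma zero_dim : hausdorff_space T -> compact [set: T] -> totally_disconnected [set: T] ->
  zero_dimensional T.
Proof.
move=> hT cT tdT x y /eqP xy; apply: contrapT => nU.
have Uy : forall U, clopen U -> U x -> U y.
  by move=> U cU Ux; apply: contrapT => nUy; apply: nU; exists U.
pose P := [set U : set T | clopen U /\ U x].
pose Q := \bigcap_(U in P) U.
have PT : P setT by split => //; exact: clopenT.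
have PI : forall A B, P A -> P B -> P (A `&` B).
  by move=> A B [cA Ax] [cB Bx]; split => //; exact: clopenI.
have Pc : forall A, P A -> closed A by move=> A [[]].
have cQ : closed Q by apply: closed_bigI => U [[]].
have Qx : Q x by move=> U [].
have split_lem : forall X1 X2 : set T, closed X1 -> closed X2 -> X1 `&` X2 = set0 ->
    Q `<=` X1 `|` X2 -> X1 x -> Q `<=` X1.
  move=> X1 X2 c1 c2 d12 QX X1x.
  have [U1 [U2 [oU1 oU2 XU1 XU2 U12]]] := sep_closed X1 X2 hT cT c1 c2 d12.
  have [C PC CU] : exists2 C, P C & C `<=` U1 `|` U2.
    apply: fip => //; first exact: openU.
    move=> z Pz; have : Q z by move=> U PU; exact: Pz.
    by move/QX => [/XU1|/XU2]; [left|right].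
  have eqC : C `&` U1 = C `&` ~` U2.
    apply/seteqP; split => z [Cz Uz]; split => //.
      by move=> U2z; have : (U1 `&` U2) z by []; rewrite U12.
    by have [] := CU z Cz.
  have PCU : P (C `&` U1).
    split; last by split; [case: PC => _ | apply: XU1].
    split; first by apply: openI => //; case: PC => -[].
    by rewrite eqC; apply: closedI; [case: PC => -[]|exact: open_closedC].
  move=> z Qz; have [Cz U1z] := Qz _ PCU.
  have [//|X2z] := QX z Qz.
  have : (U1 `&` U2) z by split => //; exact: XU2.
  by rewrite U12.
have cnQ : connected Q.
  move=> B [b Bb] [C1 oC1 BC1] [D cD BD].
  have BC1D : forall z, B z -> C1 z by move=> z; rewrite BC1 => -[].
  have QC1B : forall z, Q z -> C1 z -> B z by move=> z Qz C1z; rewrite BC1.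
  have [xB|nxB] := pselect (B x).
    apply/seteqP; split; first by rewrite BD => z [].
    rewrite BD; apply: (split_lem _ (Q `&` ~` C1)).
    - exact: closedI.
    - by apply: closedI => //; exact: open_closedC.
    - apply/seteqP; split => // z [[Qz Dz] [_ nC]]; apply: nC.
      by apply: BC1D; rewrite BD.
    - move=> z Qz; have [C1z|nC1z] := pselect (C1 z); [left|right].
        by rewrite -BD; exact: QC1B.
      by [].
    - by rewrite -BD.
  exfalso; have : (Q `&` ~` C1) b.
    apply: (split_lem _ (Q `&` D)).
    - by apply: closedI => //; exact: open_closedC.
    - exact: closedI.
    - apply/seteqP; split => // z [[Qz nC] [_ Dz]]; apply: nC.
      by apply: BC1D; rewrite BD.
    - move=> z Qz; have [C1z|nC1z] := pselect (C1 z); [right|left].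
        by rewrite -BD; exact: QC1B.
      by [].
    - by split => // C1x; apply: nxB; exact: QC1B.
    - by have := Bb; rewrite BD => -[].
  by case=> _; apply; exact: BC1D.
have Qy : Q y by move=> U [cU Ux]; exact: Uy.
have : connected_component [set: T] x y.
  by exists Q => //; split.
by rewrite tdT // => yx; exact: xy (esym yx).
Qed.
End Topo.


Lemma unif (T S : topologicalType) (phi : T * S -> S) (x : S) (K : set S) :
  compact [set: T] -> continuous phi -> clopen K ->
  \forall y \near x, forall t, K (phi (t, y)) <-> K (phi (t, x)).
Proof.
move=> cT cphi [oK cK].
have oKc : open (~` K) by exact: closed_openC.
have := (compact_near_coveringP _).1 cT S (nbhs x)
  (fun y t => K (phi (t, y)) <-> K (phi (t, x))) _.
move=> H.
suff cov : forall t0, [set: T] t0 -> \forall x' \near t0 & i \near nbhs x, K (phi (x', i)) <-> K (phi (x', x)).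
  by apply: filterS (H _ cov) => y Hy t; exact: Hy.
move=> t0 _.
pose M := if pselect (K (phi (t0, x))) then K else ~` K.
have oM : open M by rewrite /M; case: pselect.
have Mt : M (phi (t0, x)) by rewrite /M; case: pselect.
have := cphi (t0, x) M (open_nbhs_nbhs (conj oM Mt)).
case=> -[A B] /= [nA nB] AB.
exists (A, B) => //= -[t y] /= [At By].
have h1 : M (phi (t, y)) by exact: (AB (t, y)).
have h2 : M (phi (t, x)) by apply: (AB (t, x)); split => //; exact: nbhs_singleton.
move: h1 h2; rewrite /M; case: pselect => p h1 h2; split => // _; exact: h2.
Qed.

Lemma cont_pair {X Y Z : topologicalType} (f : X -> Y) (g : X -> Z) :
  continuous f -> continuous g -> continuous (fun x => (f x, g x)).
Proof. by move=> cf cg x; apply: cvg_pair; [exact: cf|exact: cg]. Qed.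

Lemma cont_fst {X Y : topologicalType} : continuous (@fst X Y).
Proof. by move=> [a b]; exact: cvg_fst. Qed.

Lemma cont_snd {X Y : topologicalType} : continuous (@snd X Y).
Proof. by move=> [a b]; exact: cvg_snd. Qed.

Lemma cont_comp {X Y Z : topologicalType} (f : X -> Y) (g : Y -> Z) :
  continuous f -> continuous g -> continuous (g \o f).
Proof. by move=> cf cg x; apply: continuous_comp; [exact: cf|exact: cg]. Qed.

Section Syn.
Context {S : topologicalType} (mul : S -> S -> S).

Definition lm (u : option S) x := if u is Some a then mul a x else x.
Definition rm x (v : option S) := if v is Some b then mul x b else x.
Definition syn (K : set S) : set (S * S) :=
  [set p | forall u v, K (lm u (rm p.1 v)) <-> K (lm u (rm p.2 v))].

Lemma syn_cong K : associative mul -> congruence mul (syn K).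
Proof.
move=> hA; split.
- by move=> x u v.
- by move=> x y h u v; split => /(h u v).
- by move=> x y z h1 h2 u v; split => [/(h1 u v)/(h2 u v)|/(h2 u v)/(h1 u v)].
- move=> x y x' y' h h' u v /=.
  have e1 : forall a b, rm (mul a b) v = rm a (Some (rm b v)).
    by move=> a b; case: v => //= c; rewrite hA.
  have e2 : forall a w, lm u (rm a (Some w)) = lm (Some (lm u a)) w.
    by move=> a w; case: u => //= c; rewrite hA.
  rewrite !e1; split.
  + move=> /(h u (Some (rm x' v))); rewrite e2 => /(h' _ v).
    by rewrite -e2.
  + move=> H; apply/(h u (Some (rm x' v))); rewrite e2.
    by apply/(h' _ v); rewrite -e2.
Qed.

Lemma syn_sat K z w : syn K (z, w) -> K z -> K w.
Proof. by move=> h; apply: (h None None).1. Qed.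

Lemma syn_nbhs K x : associative mul -> compact [set: S] ->
  continuous (fun p : S * S => mul p.1 p.2) -> clopen K ->
  \forall y \near x, syn K (x, y).
Proof.
move=> hA cS cm cK.
have cSS : compact [set: S * S] by rewrite -setXTT; exact: compact_setX.
pose m2 := fun p : S * S => mul p.1 p.2.
have c1 : continuous (fun q : (S * S) * S => q.2) by exact: cont_snd.
have c2 : continuous (fun q : (S * S) * S => mul q.1.1 q.2).
  apply: (@cont_comp _ _ _ (fun q : (S * S) * S => (q.1.1, q.2)) m2) => //.
  apply: cont_pair => //; exact: (@cont_comp _ _ _ fst fst cont_fst cont_fst).
have c3 : continuous (fun q : (S * S) * S => mul q.2 q.1.2).
  apply: (@cont_comp _ _ _ (fun q : (S * S) * S => (q.2, q.1.2)) m2) => //.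
  apply: cont_pair => //; exact: (@cont_comp _ _ _ fst snd cont_fst cont_snd).
have c4 : continuous (fun q : (S * S) * S => mul q.1.1 (mul q.2 q.1.2)).
  apply: (@cont_comp _ _ _ (fun q : (S * S) * S => (q.1.1, mul q.2 q.1.2)) m2) => //.
  apply: cont_pair => //; exact: (@cont_comp _ _ _ fst fst cont_fst cont_fst).
have h1 := @unif _ _ _ x K cSS c1 cK.
have h2 := @unif _ _ _ x K cSS c2 cK.
have h3 := @unif _ _ _ x K cSS c3 cK.
have h4 := @unif _ _ _ x K cSS c4 cK.
apply: filterS (filterI h1 (filterI h2 (filterI h3 h4))) => y [H1 [H2 [H3 H4]]] u v.
case: u v => [a|] [b|] /=.
- exact: iff_sym (H4 (a, b)).
- exact: iff_sym (H2 (a, a)).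
- exact: iff_sym (H3 (b, b)).
- exact: iff_sym (H1 (x, x)).
Qed.

End Syn.

Set Implicit Arguments. Unset Strict Implicit. Unset Printing Implicit Defensive.


Section Cong.
Context {S : topologicalType} (mul : S -> S -> S).

Lemma cong_sym (r : set (S * S)) x y : congruence mul r -> r (x, y) -> r (y, x).
Proof. by case=> _ h _ _; exact: h. Qed.
Lemma cong_trans (r : set (S * S)) x y z : congruence mul r -> r (x, y) -> r (y, z) -> r (x, z).
Proof. by case=> _ _ h _; exact: h. Qed.
Lemma cong_refl (r : set (S * S)) x : congruence mul r -> r (x, x).
Proof. by case=> h _ _ _; exact: h. Qed.
Lemma cong_mul (r : set (S * S)) x y x' y' : congruence mul r -> r (x, y) -> r (x', y') ->
  r (mul x x', mul y y').
Proof. by case=> _ _ _ h; exact: h. Qed.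

Lemma cong_open (r : set (S * S)) : congruence mul r ->
  (forall x, \forall y \near x, r (x, y)) -> open r.
Proof.
move=> cr nr; rewrite openE => -[a b] rab.
exists ([set y | r (a, y)], [set y | r (b, y)]) => /=; first by split; [exact: nr|exact: nr].
move=> [c d] /= [ac bd]; apply: (cong_trans cr) bd.
by apply: (cong_trans cr) rab; exact: cong_sym.
Qed.

Lemma open_cong_class (r : set (S * S)) x : open_congruence mul r ->
  \forall y \near x, r (x, y).
Proof.
move=> [cr or]; have : nbhs (x, x) r by apply: open_nbhs_nbhs; split => //; exact: cong_refl.
case=> -[A B] /= [nA nB] AB; apply: filterS nB => y By.
by apply: (AB (x, y)); split => //; exact: nbhs_singleton.
Qed.

Lemma open_cong_class_open (r : set (S * S)) x : open_congruence mul r ->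
  open [set y | r (x, y)].
Proof.
move=> hr; rewrite openE => y rxy.
apply: filterS (open_cong_class y hr) => z ryz.
by apply: (cong_trans hr.1) ryz.
Qed.

Lemma open_cong_class_closed (r : set (S * S)) x : open_congruence mul r ->
  closed [set y | r (x, y)].
Proof.
move=> hr; rewrite -[X in closed X]setCK; apply: open_closedC.
rewrite openE => y nrxy; apply: filterS (open_cong_class y hr) => z ryz rxz.
by apply: nrxy; exact: (cong_trans hr.1 rxz (cong_sym hr.1 ryz)).
Qed.

Hypothesis hS : profinite_semigroup mul.

Lemma L_clopen z (V : set S) : open V -> V z ->
  exists2 K, (clopen K /\ K z) & K `<=` V.
Proof.
case: hS => hA [cm [cS [hT tdT]]] oV Vz.
have zd := zero_dim hT cS tdT.
apply: fip => //.
- by split => //; exact: clopenT.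
- by move=> A B [cA Az] [cB Bz]; split => //; exact: clopenI.
- by move=> A [[]].
- move=> w Pw; have [->//|/eqP wz] := pselect (w = z).
  have [U [cU Uz nUw]] := zd z w ltac:(by rewrite eq_sym).
  by exfalso; apply: nUw; apply: Pw.
Qed.

Lemma L_nb z (V : set S) : open V -> V z ->
  exists r, open_congruence mul r /\ forall w, r (z, w) -> V w.
Proof.
move=> oV Vz; have [K [cK Kz] KV] := L_clopen oV Vz.
case: hS => hA [cm [cS [hT tdT]]].
have cong := syn_cong mul K hA.
exists (syn mul K); split; last by move=> w /(syn_sat mul K z w) h; apply: KV; exact: h.
split => //; apply: cong_open => // x; exact: syn_nbhs mul K x hA cS cm cK.
Qed.

Lemma L_sep a b : (forall r, open_congruence mul r -> r (a, b)) -> a = b.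
Proof.
move=> H; apply: contrapT => /eqP ab.
have hT : hausdorff_space S by case: hS => _ [_ [_ []]].
have [A [oA aA bA]] := hausdorff_accessible hT ab.
rewrite inE in aA; rewrite inE in bA.
have [r [hr rA]] := L_nb oA aA.
by apply: bA; apply: rA; exact: H.
Qed.

Lemma fund_nb (P : set (S * S) -> Prop) : fundamental_system mul P ->
  forall z (V : set S), open V -> V z ->
  exists s, [/\ open_congruence mul s, P s & forall w, s (z, w) -> V w].
Proof.
move=> fs z V oV Vz; have [r [hr rV]] := L_nb oV Vz.
have [s [hs Ps sr]] := fs r hr.
by exists s; split => // w /sr; exact: rV.
Qed.

Lemma fund_sep (P : set (S * S) -> Prop) : fundamental_system mul P ->
  forall a b, (forall s, open_congruence mul s -> P s -> s (a, b)) -> a = b.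
Proof.
move=> fs a b H; apply: L_sep => r hr.
have [s [hs Ps sr]] := fs r hr; by apply: sr; exact: H.
Qed.
End Cong.

Local Notation finv := Pilot.Defs.finv.


Section FS.
Context {S : topologicalType} (mul : S -> S -> S).
Hypothesis hS : profinite_semigroup mul.

Lemma co_open (K O : set S) : compact K -> open O ->
  open ([set g | g @` K `<=` O] : set (@CO S)).
Proof. exact: compact_open_open. Qed.

Lemma co_open1 x (O : set S) : open O -> open ([set g | O (g x)] : set (@CO S)).
Proof.
move=> oO; have := co_open (@compact_set1 S x) oO.
suff -> : [set g | g @` [set x] `<=` O] = [set g : @CO S | O (g x)] by [].
apply/seteqP; split => g /=; first by apply; exists x.
by move=> Ogx _ [y -> <-].
Qed.

Lemma co_nbhs1 (f : S -> S) x (O : set S) : open O -> O (f x) ->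
  nbhs (f : @CO S) [set g | O (g x)].
Proof. by move=> oO Ofx; apply: open_nbhs_nbhs; split => //; exact: co_open1. Qed.

Lemma equi_cvg (G : set (S -> S)) (F : set_system (S -> S)) (g : S -> S) :
  fundamental_system mul (invariant_under G) -> Filter F -> F G ->
  (forall x (W : set S), open W -> W (g x) -> F [set h | W (h x)]) ->
  F --> (g : @CO S).
Proof.
move=> fs FF FG Fpt; apply: (proj2 (@compact_open_cvgP S S F g FF)) => K O cK oO gKO.
have := (compact_near_coveringP K).1 cK (S -> S) F (fun h y => O (h y)) FF.
move=> H.
suff cov : forall x, K x -> \forall x' \near x & i \near F, O (i x').
  by apply: filterS (H cov) => h hK _ [y Ky <-]; exact: hK.
move=> x Kx; have Ogx : O (g x) by apply: gKO; exists x.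
have [s [hs inv sO]] := fund_nb hS fs oO Ogx.
exists ([set y | s (x, y)], [set h | G h /\ s (g x, h x)]) => /=.
  split; first exact: (open_cong_class x hs).
  apply: filterI => //; apply: (Fpt x [set w | s (g x, w)]); first exact: (open_cong_class_open (g x) hs).
  exact: cong_refl hs.1.
move=> [y h] /= [sxy [Gh sgh]]; apply: sO.
exact: (cong_trans hs.1 sgh (inv h Gh _ _ sxy)).
Qed.


Lemma partA (G : set (S -> S)) : @compact (@CO S) G -> G `<=` End_set mul -> G id ->
  (forall f g, G f -> G g -> G (f \o g)) -> fundamental_system mul (invariant_under G).
Proof.
move=> cG GE Gid Gc r hr.
have [cS hT] : compact [set: S] /\ hausdorff_space S by case: hS => _ [_ [? [? _]]].
pose s := [set p : S * S | forall f, G f -> r (f p.1, f p.2)].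
have cr := hr.1.
have cs : congruence mul s.
  split.
  - by move=> x f _; exact: cong_refl cr.
  - by move=> x y h f Gf; exact: cong_sym cr (h f Gf).
  - by move=> x y z h1 h2 f Gf; exact: cong_trans cr (h1 f Gf) (h2 f Gf).
  - move=> x y x' y' h h' f Gf /=; have [_ hom] := GE f Gf.
    rewrite !hom; exact: cong_mul cr (h f Gf) (h' f Gf).
exists s; split => //; last by move=> [x y] /(_ id Gid).
  split => //; apply: (cong_open cs) => x.
  have := (@compact_near_coveringP (@CO S) G).1 cG S (nbhs x) (fun y f => r (f x, f y)) _.
  move=> H.
  apply: filterS (H _ _) => [y Hy f Gf|f Gf]; first exact: Hy.
  have [cf _] := GE f Gf.
  pose C := f @^-1` [set w | r (f x, w)].
  have oC : open C by apply: open_comp; [move=> z _; exact: cf|exact: (open_cong_class_open (f x) hr)].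
  have clC : closed C.
    by apply: (continuous_closedP f).1 => //; exact: (open_cong_class_closed (x:=f x) hr).
  have cC : compact C by apply: (subclosed_compact clC cS).
  have Cx : C x by exact: cong_refl cr.
  exists ([set f' : @CO S | f' @` C `<=` [set w | r (f x, w)]], C) => /=.
    split; last by apply: open_nbhs_nbhs.
    apply: open_nbhs_nbhs; split; first by apply: co_open => //; exact: (open_cong_class_open (f x) hr).
    by move=> _ [z Cz <-].
  move=> [f' y] /= [f'C Cy].
  have h1 : r (f x, f' x) by apply: f'C; exists x.
  have h2 : r (f x, f' y) by apply: f'C; exists y.
  exact: cong_trans cr (cong_sym cr h1) h2.
move=> h Gh x y sxy f Gf /=; exact: (sxy (f \o h) (Gc _ _ Gf Gh)).
Qed.

Lemma ultra_lim (X : Type) (U : set_system X) (phi : X -> S) : UltraFilter U ->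
  exists c : S, forall W : set S, nbhs c W -> U [set a | W (phi a)].
Proof.
move=> UU; have [cS _] : compact [set: S] /\ True by case: hS => _ [_ [? _]].
have [c [_ clc]] := cS (phi @ U) _ filterT.
exists c => W nW.
have [//|Un] := in_ultra_setVsetC (phi @^-1` W) UU.
have [w [nWw Ww]] := clc (~` W) W Un nW.
by exfalso.
Qed.


Lemma partB (G : set (S -> S)) : fundamental_system mul (invariant_under G) ->
  G `<=` End_set mul -> forall U : set_system (S -> S), UltraFilter U -> U G ->
  exists g, [/\ End_set mul g, U --> (g : @CO S) &
    forall x (W : set S), open W -> W (g x) -> U [set h | W (h x)]].
Proof.
move=> fs GE U UU UG.
pose g := fun x => projT1 (cid (ultra_lim (fun h : S -> S => h x) UU)).
have gP : forall x (W : set S), nbhs (g x) W -> U [set h | W (h x)].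
  by move=> x; exact: (projT2 (cid (ultra_lim (fun h : S -> S => h x) UU))).
have gP' : forall x (W : set S), open W -> W (g x) -> U [set h | W (h x)].
  by move=> x W oW Wg; apply: gP; apply: open_nbhs_nbhs.
have key : forall s, open_congruence mul s -> invariant_under G s ->
    forall x, U [set h | G h /\ s (g x, h x)].
  move=> s hs inv x; apply: filterI => //.
  apply: (gP' x [set w | s (g x, w)]); first exact: (open_cong_class_open (g x) hs).
  exact: cong_refl hs.1.
exists g; split => //; last exact: (equi_cvg fs _ UG gP').
split.
- move=> x W nW.
  have [s [hs inv sW]] := fund_nb hS fs (@open_interior _ W) nW.
  apply: filterS (open_cong_class x hs) => y sxy.
  apply: (@interior_subset _ W); apply: sW.
  have [h [[Gh sx] [_ sy]]] := filter_ex (filterI (key s hs inv x) (key s hs inv y)).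
  have shh := inv h Gh _ _ sxy.
  exact: cong_trans hs.1 sx (cong_trans hs.1 shh (cong_sym hs.1 sy)).
- move=> x y; apply: (fund_sep hS fs) => s hs inv.
  have [h [[Gh sx] [[_ sy] [_ sxy]]]] :=
    filter_ex (filterI (key s hs inv x) (filterI (key s hs inv y) (key s hs inv (mul x y)))).
  have [_ hom] := GE h Gh.
  rewrite hom in sxy; apply: cong_trans hs.1 sxy _.
  exact: cong_mul hs.1 (cong_sym hs.1 sx) (cong_sym hs.1 sy).
Qed.

Lemma finvK (f : S -> S) : bijective f -> cancel f (finv f) /\ cancel (finv f) f.
Proof.
move=> bf; rewrite /finv; case: pselect => [H|nH]; first by case: cid => h [].
by exfalso; apply: nH; case: bf => h fh hf; exists h.
Qed.

Lemma finv_aut (f : S -> S) : Aut_set mul f -> Aut_set mul (finv f).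
Proof.
move=> [[cf hom] bf]; have [fK Kf] := finvK bf.
have [cS hT] : compact [set: S] /\ hausdorff_space S by case: hS => _ [_ [? [? _]]].
split; last by exists f.
split.
- apply/continuousP => A oA.
  have -> : finv f @^-1` A = f @` A.
    apply/seteqP; split => y.
      by move=> Ay; exists (finv f y) => //.
    by move=> [z Az <-]; rewrite /= fK.
  have -> : f @` A = ~` (f @` (~` A)).
    apply/seteqP; split => y.
      move=> [z Az <-] [w nAw fwz]; apply: nAw.
      by have := congr1 (finv f) fwz; rewrite !fK => ->.
    move=> nfy; exists (finv f y); last by rewrite Kf.
    by apply: contrapT => nA; apply: nfy; exists (finv f y).
  apply: closed_openC; apply: compact_closed => //.
  apply: continuous_compact.
    by apply: continuous_subspaceT => x; exact: cf.
  by apply: (subclosed_compact _ cS) => //; exact: open_closedC.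
- move=> x y; apply: (can_inj fK); rewrite hom !Kf //.
Qed.


Lemma AutE : Aut_set mul `<=` End_set mul.
Proof. by move=> f []. Qed.

Lemma partB_aut : fundamental_system mul (characteristic mul) ->
  forall U : set_system (S -> S), UltraFilter U -> U (Aut_set mul) ->
  exists g, Aut_set mul g /\ U --> (g : @CO S).
Proof.
move=> fs U UU UA.
have [g [Eg cvg gpt]] := partB fs AutE UU UA.
pose h := fun x => projT1 (cid (ultra_lim (fun f : S -> S => finv f x) UU)).
have hP : forall x (W : set S), nbhs (h x) W -> U [set f | W (finv f x)].
  by move=> x; exact: (projT2 (cid (ultra_lim (fun f : S -> S => finv f x) UU))).
have hP' : forall s, open_congruence mul s -> forall x,
    U [set f | Aut_set mul f /\ s (h x, finv f x)].
  move=> s hs x; apply: filterI => //; apply: (hP x [set w | s (h x, w)]).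
  apply: open_nbhs_nbhs; split; first exact: (open_cong_class_open (h x) hs).
  exact: cong_refl hs.1.
have gP : forall s, open_congruence mul s -> forall x,
    U [set f | s (g x, f x)].
  move=> s hs x; apply: (gpt x [set w | s (g x, w)]).
    exact: (open_cong_class_open (g x) hs).
  exact: cong_refl hs.1.
exists g; split => //; split => //; exists h.
- move=> x; apply: (fund_sep hS fs) => s hs inv.
  have [f [[Af s1] s2]] := filter_ex (filterI (hP' s hs (g x)) (gP s hs x)).
  have [fK _] := finvK Af.2.
  have := inv (finv f) (finv_aut Af) _ _ s2; rewrite fK => s3.
  exact: cong_trans hs.1 s1 s3.
- move=> x; apply: (fund_sep hS fs) => s hs inv.
  have [f [[Af s1] s2]] := filter_ex (filterI (hP' s hs x) (gP s hs (h x))).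
  have [_ Kf] := finvK Af.2.
  have := inv f Af _ _ s1; rewrite Kf => s3.
  exact: cong_trans hs.1 s2 s3.
Qed.

End FS.


Lemma pw_cvgP (S : topologicalType) (F : set_system (S -> S)) (f : S -> S) : Filter F ->
  F --> (f : @PW S) <-> forall x (W : set S), nbhs (f x) W -> F [set h | W (h x)].
Proof.
move=> FF; rewrite /PW.
rewrite (@cvg_sup _ _ _ F f FF).
have surj : forall x : S, (fun h : S -> S => h x) @` setT = setT.
  by move=> x; apply/seteqP; split => // y _; exists (fun _ => y).
split => H x.
  move: (H x); rewrite (@cvg_image _ _ (fun h : S -> S => h x) F f FF (surj x)).
  move=> Hx W nW; have [A FA AW] := Hx W nW.
  by apply: filterS FA => h Ah; rewrite -AW; exists h.
rewrite (@cvg_image _ _ (fun h : S -> S => h x) F f FF (surj x)).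
move=> W nW; exists [set h | W (h x)]; first exact: H.
apply/seteqP; split => [_ [h Wh <-]//|y Wy]; exists (fun _ => y) => //.
Qed.

Lemma relopen_of (T : topologicalType) (E A : set T) : A `<=` E ->
  (forall f, A f -> exists2 B, nbhs f B & B `&` E `<=` A) ->
  exists U, open U /\ A = U `&` E.
Proof.
move=> AE H.
exists [set g | exists2 B, open B & B g /\ B `&` E `<=` A]; split.
  rewrite {1}openE => g [B oB [Bg BA]].
  have nB : nbhs g B by apply: open_nbhs_nbhs; split.
  by apply: filterS nB => h Bh; exists B.
apply/seteqP; split => [f Af|f [[B oB [Bf BA]] Ef]]; last exact: BA.
split; last exact: AE.
have [B nB BA] := H f Af.
exists B°; first exact: open_interior.
split; first exact: nB.
by move=> h [/interior_subset Bh Eh]; exact: BA.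
Qed.

Section FS2.
Context {S : topologicalType} (mul : S -> S -> S).
Hypothesis hS : profinite_semigroup mul.

Lemma co_hsub (G : set (S -> S)) : hausdorff_space (subspace (G : set (@CO S))).
Proof.
have hT : hausdorff_space S by case: hS => _ [_ [_ []]].
rewrite open_hausdorff => f g /eqP fg.
have [x fgx] : exists x, f x <> g x.
  apply: contrapT => H; apply: fg; apply: funext => x; apply: contrapT => ne.
  by apply: H; exists x.
move: (hT); rewrite open_hausdorff => /(_ (f x) (g x)).
have /[swap]/[apply] : f x != g x by apply/eqP.
case=> -[V W] /= [fV gW] [oV oW VW0].
exists (([set h | V (h x)] : set (subspace (G : set (@CO S)))),
        ([set h | W (h x)] : set (subspace (G : set (@CO S))))) => /=.
  by rewrite !inE; rewrite !inE in fV gW.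
split.
- by apply: open_subspaceW; exact: co_open1.
- by apply: open_subspaceW; exact: co_open1.
- apply/eqP/seteqP; split => h // [Vh Wh].
  by have : (V `&` W) (h x) by []; rewrite (eqP VW0).
Qed.

Lemma co_td (G : set (S -> S)) : @totally_disconnected (@CO S) G.
Proof.
have [cS [hT tdT]] : compact [set: S] /\ hausdorff_space S /\ totally_disconnected [set: S].
  by case: hS => _ [_ [? [? ?]]].
have zd := zero_dim hT cS tdT.
move=> f Gf; apply/seteqP; split; last by move=> _ ->; exact: connected_component_refl.
move=> y [C [Cf CG cnC] Cy]; apply: contrapT => yf.
have [x fyx] : exists x, f x <> y x.
  apply: contrapT => H; apply: yf; apply: funext => x; apply: contrapT => ne.
  by apply: H; exists x; apply: nesym.
have [K [[oK cK] Kf nKy]] := zd (f x) (y x) ltac:(by apply/eqP).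
pose W := [set h : @CO S | K (h x)].
have oW : open W by exact: co_open1.
have eW : W = ~` [set h : @CO S | (~` K) (h x)].
  apply/seteqP; split => h /=; first by move=> Kh nKh.
  by move=> nn; apply: contrapT.
have cW : closed W by rewrite eW; apply: open_closedC; apply: co_open1; exact: closed_openC.
have CW : C `&` W = C.
  apply: cnC; first by exists f.
  - by exists W.
  - by exists W.
have : (C `&` W) y by rewrite CW.
by case.
Qed.


Lemma comp_cont (G : set (S -> S)) : G `<=` End_set mul ->
  {within (G `*` G : set (@CO S * @CO S)),
     continuous (fun p : @CO S * @CO S => (p.1 \o p.2 : @CO S))}.
Proof.
move=> GE.
have [cS hT] : compact [set: S] /\ hausdorff_space S by case: hS => _ [_ [? [? _]]].
apply/subspace_continuousP => -[f g] [/= Gf Gg].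
apply: (proj2 (@compact_open_cvgP S S _ (f \o g) _)) => K O cK oO fgKO.
have := (compact_near_coveringP K).1 cK (@CO S * @CO S)%type
  (within (G `*` G) (nbhs ((f, g) : @CO S * @CO S))) (fun q y => O (q.1 (q.2 y))) _.
move=> H.
apply: filterS (H _ _) => [q Hq _ [y Ky <-]|x Kx]; first exact: Hq.
have [cf _] := GE f Gf; have [cg _] := GE g Gg.
have Ofgx : O (f (g x)) by apply: fgKO; exists x.
have oV : open (f @^-1` O) by apply: open_comp => // z _; exact: cf.
have [C [[oC clC] Cg] CV] := L_clopen hS oV Ofgx.
pose N := g @^-1` C.
have oN : open N by apply: open_comp => // z _; exact: cg.
have clN : closed N by apply: (continuous_closedP g).1.
have cN : compact N by apply: (subclosed_compact clN cS).
have cC : compact C by apply: (subclosed_compact clC cS).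
exists (N, [set q : @CO S * @CO S | q.1 @` C `<=` O /\ q.2 @` N `<=` C]) => /=.
  split; first by apply: open_nbhs_nbhs.
  have nB : nbhs ((f, g) : @CO S * @CO S)
      [set q : @CO S * @CO S | q.1 @` C `<=` O /\ q.2 @` N `<=` C].
    exists ([set h : @CO S | h @` C `<=` O], [set h : @CO S | h @` N `<=` C]) => /=.
      split; apply: open_nbhs_nbhs; split.
      - exact: co_open.
      - by move=> _ [z Cz <-]; exact: CV.
      - exact: co_open.
      - by move=> _ [z Nz <-].
    by move=> [a b] /= [].
  by apply: filterS nB => q Bq _.
move=> [y q] /= [Ny [q1 q2]]; apply: q1; exists (q.2 y) => //; by apply: q2; exists y.
Qed.


Lemma finv_cont : fundamental_system mul (characteristic mul) ->
  {within (Aut_set mul : set (@CO S)), continuous (fun f : @CO S => (finv f : @CO S))}.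
Proof.
move=> fs; apply/subspace_continuousP => f Af.
apply: (proj2 (@compact_open_cvgP S S _ (finv f) _)) => K O cK oO fKO.
have := (compact_near_coveringP K).1 cK (@CO S)
  (within (Aut_set mul) (nbhs (f : @CO S))) (fun h y => O (finv h y)) _.
move=> H.
apply: filterS (H _ _) => [q Hq _ [y Ky <-]|x Kx]; first exact: Hq.
have [fK Kf] := finvK Af.2.
pose w := finv f x.
have Ow : O w by apply: fKO; exists x.
have [s [hs inv sO]] := fund_nb hS fs oO Ow.
exists ([set y | s (x, y)], [set h : @CO S | Aut_set mul h /\ s (x, h w)]) => /=.
  split; first exact: (open_cong_class x hs).
  have nB : nbhs (f : @CO S) [set h : @CO S | s (x, h w)].
    apply: (co_nbhs1 (O:=[set v | s (x, v)])); first exact: (open_cong_class_open x hs).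
    by rewrite /w Kf; exact: cong_refl hs.1.
  by apply: filterS nB => h Bh Ah.
move=> [y h] /= [sxy [Ah sxh]].
have [hK _] := finvK Ah.2.
have s1 : s (h w, y) := cong_trans hs.1 (cong_sym hs.1 sxh) sxy.
have := inv (finv h) (finv_aut hS Ah) _ _ s1; rewrite hK => s2.
exact: sO.
Qed.


Lemma co_le_pw (f : S -> S) : (nbhs (f : @CO S) : set_system (S -> S)) --> (f : @PW S).
Proof.
apply/pw_cvgP => x W nW.
have nI : nbhs (f : @CO S) [set h | W° (h x)].
  apply: co_nbhs1 => //; exact: open_interior.
by apply: filterS nI => h /interior_subset.
Qed.

Lemma pw_within_co (G : set (S -> S)) (f : S -> S) :
  fundamental_system mul (invariant_under G) ->
  within G (nbhs (f : @PW S)) --> (f : @CO S).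
Proof.
move=> fs; apply: (@equi_cvg S mul hS G (within G (nbhs (f : @PW S))) f fs) => //; first exact: (@within_filter _ G _ (@nbhs_filter (@PW S) f)).
  exact: (@withinT _ (nbhs (f : @PW S)) G (@nbhs_filter (@PW S) f)).
move=> x W oW Wf.
have : nbhs (f : @PW S) [set h | W (h x)].
  apply: ((@pw_cvgP S (nbhs (f : @PW S)) f (@nbhs_filter (@PW S) f)).1 (@cvg_id _ _)).
  by apply: open_nbhs_nbhs.
move=> H; exact: (@filterS _ _ (@nbhs_filter (@PW S) f) _ _ (fun h Wh _ => Wh) H).
Qed.

Lemma same_top (G : set (S -> S)) :
  fundamental_system mul (invariant_under G) -> same_topology_on G.
Proof.
move=> fs A AG; split.
- move=> [U [oU AU]].
  apply: (@relopen_of (@PW S) G A AG) => f Af.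
  have nU : nbhs (f : @CO S) U.
    by apply: open_nbhs_nbhs; split => //; move: Af; rewrite AU => -[].
  have := @pw_within_co G f fs U nU.
  move=> H; exists [set h | G h -> U h] => //.
  by move=> h [Hh Gh]; rewrite AU; split => //; exact: Hh.
- move=> [U [oU AU]].
  apply: (@relopen_of (@CO S) G A AG) => f Af.
  have nU : nbhs (f : @PW S) U.
    by apply: open_nbhs_nbhs; split => //; move: Af; rewrite AU => -[].
  exists U; first exact: (co_le_pw nU).
  by move=> h [Uh Gh]; rewrite AU.
Qed.

End FS2.


Theorem theorem4 (S : topologicalType) (mul : S -> S -> S) :
  profinite_semigroup mul ->
  [/\ (@compact (@CO S) (End_set mul) <->
         fundamental_system mul (fully_invariant mul)),
      (@compact (@CO S) (Aut_set mul) <->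
         fundamental_system mul (characteristic mul)),
      (@compact (@CO S) (End_set mul) ->
         profinite_monoid (End_set mul) /\ same_topology_on (End_set mul)) &
      (@compact (@CO S) (Aut_set mul) ->
         profinite_group (Aut_set mul) /\ same_topology_on (Aut_set mul))].
Proof.
move=> hS.
have Eid : End_set mul id by split => // x; exact: cvg_id.
have Ecomp : forall f g, End_set mul f -> End_set mul g -> End_set mul (f \o g).
  move=> f g [cf hf] [cg hg]; split; first exact: cont_comp.
  by move=> x y /=; rewrite hg hf.
have Aid : Aut_set mul id by split => //; exists id.
have Acomp : forall f g, Aut_set mul f -> Aut_set mul g -> Aut_set mul (f \o g).
  move=> f g [Ef bf] [Eg bg]; split; first exact: Ecomp.
  exact: bij_comp.
have AE : Aut_set mul `<=` End_set mul by move=> f [].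
have fsE : @compact (@CO S) (End_set mul) -> fundamental_system mul (fully_invariant mul).
  by move=> cE; apply: partA.
have fsA : @compact (@CO S) (Aut_set mul) -> fundamental_system mul (characteristic mul).
  by move=> cA; apply: partA.
split.
- split => // fs; rewrite (compact_ultra (@CO S)) => U UU UE.
  have [g [Eg cvg _]] := partB hS fs (fun f h => h) UU UE.
  by exists g.
- split => // fs; rewrite (compact_ultra (@CO S)) => U UU UA.
  have [g [Ag cvg]] := partB_aut hS fs UU UA.
  by exists g.
- move=> cE; split; last exact: (@same_top S mul hS (End_set mul) (fsE cE)).
  split => //; [exact: (@co_hsub S mul hS (End_set mul))|exact: (@co_td S mul hS (End_set mul))|exact: (@comp_cont S mul hS (End_set mul) (fun f h => h))].
- move=> cA; split; last exact: (@same_top S mul hS (Aut_set mul) (fsA cA)).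
  split; last exact: finv_cont hS (fsA cA).
  split => //; [exact: (@co_hsub S mul hS (Aut_set mul))|exact: (@co_td S mul hS (Aut_set mul))|exact: (@comp_cont S mul hS (Aut_set mul) AE)].
Qed.
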